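(* Consider scheduling a single task on $n\ge 2$ machines without payments, in the model where machines are bound by their declarations (described in the context). Fix constants $L>2(n-1)$ and $c>1$, and let $\mathcal A_{L,c}$ be the following randomized allocation rule. Given declarations $\hat{\mathbf t}=(\hat t_1,\dots,\hat t_n)$, let $\hat t_{\min}$ be the smallest declaration and $N_{\min}$ the set of machines declaring it, and let $\hat t_{\mathrm{sec}}$ be the second smallest distinct declaration and $N_{\mathrm{sec}}$ the set of machines declaring it (if all machines declare the same value, set $\hat t_{\mathrm{sec}}=\hat t_{\min}$); let $n_{\min}=|N_{\min}|$, $n_{\mathrm{sec}}=|N_{\mathrm{sec}}|$. The probability $a_i$ that machine $i$ gets the task is: (i) if $\hat t_{\min}=\hat t_{\mathrm{sec}}$: $a_i=\tfrac1n$ for all $i$; (ii) if $\hat t_{\min}<\hat t_{\mathrm{sec}}<c\,\hat t_{\min}$: $a_i=\frac{1}{L\,n_{\min}}$ for $i\in N_{\min}$, $a_i=\frac{1-1/L}{n_{\mathrm{sec}}}$ for $i\in N_{\mathrm{sec}}$, and $a_i=0$ otherwise; (iii) if $\hat t_{\mathrm{sec}}\ge c\,\hat t_{\min}$: $a_i=\frac{1}{n_{\min}}\Big(1-\sum_{k\notin N_{\min}}\frac{\hat t_{\min}}{L\,\hat t_k}\Big)$ for $i\in N_{\min}$, and $a_i=\frac{\hat t_{\min}}{L\,\hat t_i}$ for $i\notin N_{\min}$. Then the pure Price of Anarchy of $\mathcal A_{L,c}$ is at most $1+\frac{n-1}{L}$.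
   Context: Model: there are $n$ machines and one task. Machine $i$ has a private true execution time $t_i\ge 0$ for the task and reports a declaration $\hat t_i\ge 0$. A (randomized) allocation rule maps the declaration vector $\hat{\mathbf t}$ to probabilities $a_i(\hat{\mathbf t})$ with $\sum_i a_i=1$; no payments are used. Machines are bound by their declarations: if machine $i$ gets the task she executes it for time $\max\{\hat t_i,t_i\}$. Hence the (expected) cost of machine $i$ is $C_i(\hat{\mathbf t})=a_i(\hat{\mathbf t})\max\{\hat t_i,t_i\}$, and the makespan is $\mathcal M(\hat{\mathbf t})=\sum_i a_i(\hat{\mathbf t})\max\{\hat t_i,t_i\}$. A pure Nash equilibrium is a deterministic declaration vector $\hat{\mathbf t}$ such that for every machine $i$ and every alternative declaration $x\ge 0$, $C_i(\hat{\mathbf t})\le C_i(x,\hat{\mathbf t}_{-i})$. The pure Price of Anarchy of a rule is the supremum, over all true instances $\mathbf t$, of the ratio of the makespan of the worst pure Nash equilibrium to the optimal makespan $\min_i t_i$. *)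

(* Defs.v *)
From mathcomp Require Import all_boot all_order all_algebra.
Set Implicit Arguments. Unset Strict Implicit. Unset Printing Implicit Defensive.
Import Order.TTheory GRing.Theory Num.Theory.
Local Open Scope ring_scope.

Section Sched.
Variables (R : realFieldType) (n : nat).

Definition tmin (d : 'I_n -> R) : R :=
  match [pick i | [forall j, d i <= d j]] with Some i => d i | None => 0 end.

Definition tsec (d : 'I_n -> R) : R :=
  match [pick i | (tmin d < d i) &&
                  [forall j, (tmin d < d j) ==> (d i <= d j)]] with
  | Some i => d i | None => tmin d end.

Definition Nmin (d : 'I_n -> R) : {set 'I_n} := [set i | d i == tmin d].
Definition Nsec (d : 'I_n -> R) : {set 'I_n} := [set i | d i == tsec d].

Definition alloc (L c : R) (d : 'I_n -> R) (i : 'I_n) : R :=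
  let nmin := (#|Nmin d|)%:R in
  let nsec := (#|Nsec d|)%:R in
  if tmin d == tsec d then 1 / n%:R
  else if tsec d < c * tmin d then
    (if i \in Nmin d then 1 / (L * nmin)
     else if i \in Nsec d then (1 - 1 / L) / nsec else 0)
  else
    (if i \in Nmin d then
       (1 - \sum_(k | k \notin Nmin d) tmin d / (L * d k)) / nmin
     else tmin d / (L * d i)).

(* expected cost of machine i (bound by declarations) *)
Definition cost (L c : R) (t d : 'I_n -> R) (i : 'I_n) : R :=
  alloc L c d i * Num.max (d i) (t i).

Definition makespan (L c : R) (t d : 'I_n -> R) : R :=
  \sum_i alloc L c d i * Num.max (d i) (t i).

Definition upd (d : 'I_n -> R) (i : 'I_n) (x : R) : 'I_n -> R :=
  fun j => if j == i then x else d j.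

Definition pureNE (L c : R) (t d : 'I_n -> R) : Prop :=
  (forall i, 0 <= d i) /\
  (forall i x, 0 <= x -> cost L c t d i <= cost L c t (upd d i x) i).

End Sched.

(* Main.v *)
Require Import Defs.
From mathcomp Require Import all_boot all_order all_algebra.
From mathcomp Require Import ring lra.
Import Order.TTheory GRing.Theory Num.Theory.
Local Open Scope ring_scope.
Set Implicit Arguments. Unset Strict Implicit. Unset Printing Implicit Defensive.

Ltac fld := field; rewrite ?eqxx ?andbT ?oner_eq0; repeat (apply/andP; split); try assumption.

Section Gen.
Variables (R : realFieldType) (n : nat).
Implicit Types (d : 'I_n -> R).

Lemma ex_min (P : pred 'I_n) (f : 'I_n -> R) :
  (exists j, P j) -> exists i, P i /\ forall j, P j -> f i <= f j.
Proof.
case=> j0 Pj0; case: (arg_minP f Pj0) => i Pi H; exists i; split => //.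
Qed.

Lemma tmin_spec d (j0 : 'I_n) : (exists i, tmin d = d i) /\ forall j, tmin d <= d j.
Proof.
rewrite /tmin; case: pickP => [i /forallP H|H].
  by split; [exists i|].
have [i [_ Hi]] := ex_min (P := predT) d (ex_intro _ j0 isT).
have := H i; move/negP; case; apply/forallP => j; exact: Hi.
Qed.

Lemma tmin_ge0 d : (forall i, 0 <= d i) -> forall j0 : 'I_n, 0 <= tmin d.
Proof. move=> H j0; have [[i ->] _] := tmin_spec d j0; exact: H. Qed.

Lemma tmin_eq d (i : 'I_n) v : d i = v -> (forall j, v <= d j) -> tmin d = v.
Proof.
move=> Hi Hv; have [[k Hk] H] := tmin_spec d i.
apply/le_anti; rewrite Hk Hv andbT -Hi -Hk; exact: H.
Qed.

Lemma tsec_spec d : (exists j, tmin d < d j) ->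
  [/\ tmin d < tsec d, (exists i, d i = tsec d) &
      forall j, tmin d < d j -> tsec d <= d j].
Proof.
move=> Hex; rewrite /tsec; case: pickP => [i /andP[Hi /forallP H]|H].
  split => //; first by exists i.
  by move=> j Hj; have := H j; rewrite Hj.
have [i [Pi Hi]] := ex_min (P := fun i => tmin d < d i) d Hex.
have := H i; rewrite Pi /=; move/negP; case; apply/forallP => j.
by apply/implyP => Hj; apply: Hi.
Qed.

Lemma tsec_eq d : (forall j, d j <= tmin d) -> tsec d = tmin d.
Proof.
move=> H; rewrite /tsec; case: pickP => [i /andP[Hi _]|//].
by have := H i; rewrite leNgt Hi.
Qed.

Lemma Nmin1 d (p : 'I_n) : d p = tmin d -> (forall j, j != p -> tmin d < d j) ->
  Nmin d = [set p].
Proof.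
move=> Hp H; apply/setP => j; rewrite !inE.
case: (eqVneq j p) => [->|jp]; first by rewrite Hp eqxx.
by rewrite gt_eqF // H.
Qed.

Lemma upd_eq d i x : upd d i x i = x.
Proof. by rewrite /upd eqxx. Qed.
Lemma upd_neq d i x j : j != i -> upd d i x j = d j.
Proof. by rewrite /upd => /negbTE ->. Qed.

Lemma exists_other : (2 <= n)%N -> forall p : 'I_n, exists q, q != p.
Proof.
move=> Hn p.
have h0 : (0 < n)%N by apply: leq_trans Hn.
case: (eqVneq (val p) 0%N) => Hp.
  exists (Ordinal Hn); apply/eqP => E; move: Hp; by rewrite -E.
exists (Ordinal h0); apply/eqP => E; move: Hp; by rewrite -E.
Qed.

Variables (L c : R).

Lemma alloc_i d i : tmin d = tsec d -> alloc L c d i = 1 / n%:R.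
Proof. by rewrite /alloc => ->; rewrite eqxx. Qed.
Lemma alloc_ii_min d i : tmin d != tsec d -> tsec d < c * tmin d -> i \in Nmin d ->
  alloc L c d i = 1 / (L * (#|Nmin d|)%:R).
Proof. by rewrite /alloc => /negbTE -> -> ->. Qed.
Lemma alloc_ii_sec d i : tmin d != tsec d -> tsec d < c * tmin d -> i \notin Nmin d ->
  i \in Nsec d -> alloc L c d i = (1 - 1/L) / (#|Nsec d|)%:R.
Proof. by rewrite /alloc => /negbTE -> -> /negbTE -> ->. Qed.
Lemma alloc_ii_oth d i : tmin d != tsec d -> tsec d < c * tmin d -> i \notin Nmin d ->
  i \notin Nsec d -> alloc L c d i = 0.
Proof. by rewrite /alloc => /negbTE -> -> /negbTE -> /negbTE ->. Qed.
Lemma alloc_iii_min d i : tmin d != tsec d -> c * tmin d <= tsec d -> i \in Nmin d ->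
  alloc L c d i = (1 - \sum_(k | k \notin Nmin d) tmin d / (L * d k)) / (#|Nmin d|)%:R.
Proof. by rewrite /alloc => /negbTE -> /(le_gtF) -> ->. Qed.
Lemma alloc_iii_oth d i : tmin d != tsec d -> c * tmin d <= tsec d -> i \notin Nmin d ->
  alloc L c d i = tmin d / (L * d i).
Proof. by rewrite /alloc => /negbTE -> /(le_gtF) -> /negbTE ->. Qed.

End Gen.

Section Main.
Variables (R : realFieldType) (n : nat) (L c : R).
Hypotheses (Hn : (2 <= n)%N) (HL : 2 * (n - 1)%:R < L) (Hc : 1 < c).
Variables (t d : 'I_n -> R).
Hypotheses (Ht : forall i, 0 < t i) (Hd : forall i, 0 <= d i)
  (HNE : forall i x, 0 <= x -> cost L c t d i <= cost L c t (upd d i x) i).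

Lemma n2 : 2 <= n%:R :> R.
Proof. by rewrite (ler_nat R 2 n). Qed.
Lemma nL : n%:R < L.
Proof. move: HL; rewrite natrB; last by apply: leq_trans Hn. have := n2. lra. Qed.
Lemma L2 : 2 < L.
Proof. have := nL; have := n2; lra. Qed.

Definition j0 : 'I_n := Ordinal (leq_trans (isT : (0 < 2)%N) Hn).

Lemma v0 : 0 <= tmin d.
Proof. exact: tmin_ge0 Hd j0. Qed.

Lemma caseI : ~ (forall j, d j <= tmin d).
Proof.
move=> H.
set v := tmin d.
have Hall : forall j, d j = v.
  by move=> j; apply/le_anti; rewrite H; have [_ ->] := tmin_spec d j0.
have hs := tsec_eq H.
set p := j0.
have [q qp] := exists_other Hn p.
have hv := v0; rewrite -/v in hv.
have ht := Ht p.
set x := c * v + t p + 1.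
have hcv : v <= c * v.
  by rewrite -{1}(mul1r v) ler_wpM2r // ltW.
have hx : v < x by rewrite /x; lra.
have hxc : c * v <= x by rewrite /x; lra.
have hxt : t p <= x by rewrite /x; lra.
have hmin : tmin (upd d p x) = v.
  apply: (tmin_eq (i := q)); first by rewrite upd_neq // Hall.
  move=> j; case: (eqVneq j p) => [->|jp]; first by rewrite upd_eq ltW.
  by rewrite upd_neq // Hall.
have [Hlt [i Hi] _] := tsec_spec (d := upd d p x)
   (ex_intro _ p (etrans (congr1 (fun z => z < _) hmin) (etrans (congr1 _ (upd_eq d p x)) hx))).
have ip : i = p.
  apply/eqP; apply: contraTT Hlt => ip; rewrite -Hi upd_neq // Hall hmin ltxx //.
rewrite ip upd_eq in Hi.
have := HNE p (ltW (le_lt_trans hv hx)).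
rewrite /cost (alloc_i _ _ _ (esym hs)) upd_eq.
rewrite (@alloc_iii_oth _ _ L c (upd d p x)); first last.
- by rewrite inE upd_eq hmin gt_eqF.
- by rewrite hmin -Hi.
- by rewrite hmin -Hi lt_eqF.
rewrite hmin upd_eq (max_l hxt) Hall.
have -> : v / (L * x) * x = v / L.
  have x0 : x != 0 by apply/lt0r_neq0/(le_lt_trans hv hx).
  have L0 : L != 0 by apply/lt0r_neq0; have := L2; lra.
  by fld.
move=> HH.
have hL := L2; have hnL := nL; have hn2 := n2.
have hM : v <= Num.max v (t p) by rewrite le_max lexx.
have hM2 : t p <= Num.max v (t p) by rewrite le_max lexx orbT.
set M := Num.max v (t p) in HH hM hM2.
have E1 : 1 / n%:R * M * (n%:R * L) = M * L.
  have : n%:R != 0 :> R by apply/lt0r_neq0; lra.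
  have : L != 0 by apply/lt0r_neq0; lra.
  move=> ? ?; by fld.
have E2 : v / L * (n%:R * L) = v * n%:R.
  have : n%:R != 0 :> R by apply/lt0r_neq0; lra.
  have : L != 0 by apply/lt0r_neq0; lra.
  move=> ? ?; by fld.
have := ler_wpM2r (x := n%:R * L) _ HH.
rewrite E1 E2; have : 0 <= n%:R * L :> R by nra.
move=> h /(_ h). nra.
Qed.

Lemma Linv : 0 < L^-1 /\ 2 * L^-1 < 1.
Proof.
have hL := L2.
have h1 : L^-1 * L = 1 by rewrite mulVf //; apply/lt0r_neq0; lra.
have h0 : 0 < L^-1 by rewrite invr_gt0; lra.
split => //; nra.
Qed.

Lemma caseII : (exists j, tmin d < d j) -> c * tmin d <= tsec d.
Proof.
move=> Hex; rewrite leNgt; apply/negP => Hs.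
have [Hvs [q Hq] Hle] := tsec_spec Hex.
set v := tmin d in Hvs Hle Hs Hq.
set s := tsec d in Hvs Hle Hs Hq.
have [[p Hp] Hpm] := tmin_spec d j0.
have hv := v0; rewrite -/v in hv.
have ht := Ht q.
have hcv : v <= c * v.
  by rewrite -{1}(mul1r v) ler_wpM2r // ltW.
set x := c * v + t q + 1.
have hx : v < x by rewrite /x; lra.
have hxc : c * v < x by rewrite /x; lra.
have hxt : t q <= x by rewrite /x; lra.
have pq : p != q by apply/eqP => E; move: Hvs; rewrite -Hq -E -Hp ltxx.
have hmin : tmin (upd d q x) = v.
  apply: (tmin_eq (i := p)); first by rewrite upd_neq // Hp.
  move=> j; case: (eqVneq j q) => [->|jq]; first by rewrite upd_eq ltW.
  by rewrite upd_neq //.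
have [Hlt' [i Hi] Hle'] := tsec_spec (d := upd d q x)
   (ex_intro _ q (etrans (congr1 (fun z => z < _) hmin) (etrans (congr1 _ (upd_eq d q x)) hx))).
rewrite hmin in Hlt' Hle'.
have qNmin : q \notin Nmin d by rewrite inE Hq gt_eqF.
have qNsec : q \in Nsec d by rewrite inE Hq.
have Hne : tmin d != tsec d by rewrite lt_eqF.
have := HNE q (ltW (le_lt_trans hv hx)).
rewrite /cost (alloc_ii_sec _ Hne Hs qNmin qNsec) upd_eq Hq.
have [hLi hLi2] := Linv.
have hM : s <= Num.max s (t q) by rewrite le_max lexx.
have hM2 : t q <= Num.max s (t q) by rewrite le_max lexx orbT.
set M := Num.max s (t q) in hM hM2 *.
case: (ltP (tsec (upd d q x)) (c * v)) => Hs'.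
  rewrite (@alloc_ii_oth _ _ L c (upd d q x)); first last.
  - by rewrite inE upd_eq gt_eqF // (lt_trans Hs').
  - by rewrite inE upd_eq hmin gt_eqF.
  - by rewrite hmin.
  - by rewrite hmin lt_eqF.
  rewrite mul0r.
  have hk : 0 < (#|Nsec d|)%:R :> R.
    rewrite ltr0n card_gt0; apply/set0Pn; by exists q.
  have : 0 < (1 - 1 / L) / (#|Nsec d|)%:R.
    apply: divr_gt0 => //; rewrite mul1r; lra.
  move=> h1 h2.
  have : 0 < (1 - 1 / L) / (#|Nsec d|)%:R * M by apply: mulr_gt0 => //; lra.
  lra.
have Nsec1 : Nsec d = [set q].
  apply/setP => k; rewrite !inE.
  case: (eqVneq k q) => [->|kq]; first by rewrite Hq eqxx.
  apply/negP => /eqP Hk.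
  have := Hle' k; rewrite upd_neq // Hk -/s => /(_ Hvs).
  move=> h; move: Hs'; rewrite leNgt; move/negP; apply; exact: le_lt_trans h Hs.
rewrite Nsec1 cards1 divr1.
rewrite (@alloc_iii_oth _ _ L c (upd d q x)); first last.
- by rewrite inE upd_eq hmin gt_eqF.
- by rewrite hmin.
- by rewrite hmin lt_eqF.
rewrite hmin upd_eq (max_l hxt).
have -> : v / (L * x) * x = v / L.
  have x0 : x != 0 by apply/lt0r_neq0/(le_lt_trans hv hx).
  have L0 : L != 0 by apply/lt0r_neq0; have := L2; lra.
  by fld.
rewrite mul1r => h.
have : (1 - L^-1) * v < (1 - L^-1) * M by rewrite ltr_pM2l; lra.
nra.
Qed.


Definition S0 := \sum_(k | k \notin Nmin d) tmin d / (L * d k).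

Lemma S0_ge0 : 0 <= S0.
Proof.
apply: sumr_ge0 => k _; apply: divr_ge0; first exact: v0.
apply: mulr_ge0 => //; have := L2; lra.
Qed.

Lemma keyB : L * S0 <= (#|~: Nmin d|)%:R.
Proof.
rewrite /S0 mulr_sumr.
under eq_bigl => k do rewrite -in_setC.
rewrite -sumr_const; apply: ler_sum => k _.
have hL := L2.
have hv := v0.
have [_ hk] := tmin_spec d j0.
have := hk k; have := Hd k.
case: (eqVneq (d k) 0) => [->|dk0] _ hle.
  by rewrite mulr0 invr0 !mulr0 ler01.
have dk : 0 < d k by rewrite lt0r dk0 Hd.
have -> : L * (tmin d / (L * d k)) = tmin d / d k.
  have L0 : L != 0 by apply/lt0r_neq0; lra.
  by fld.
by rewrite ler_pdivrMr // mul1r.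
Qed.

Lemma keyA : (#|Nmin d|)%:R < L * (1 - S0).
Proof.
have := keyB; have := nL; have hc := cardsC (Nmin d); rewrite card_ord in hc.
have hc' : n%:R = (#|Nmin d|)%:R + (#|~: Nmin d|)%:R :> R by rewrite -natrD hc.
lra.
Qed.

Section III.
Hypothesis Hex : exists j, tmin d < d j.
Variable p : 'I_n.
Hypothesis Hp : d p = tmin d.

Lemma Hcs : c * tmin d <= tsec d.
Proof. exact: caseII Hex. Qed.

Lemma Hne : tmin d != tsec d.
Proof. by have [h _ _] := tsec_spec Hex; rewrite lt_eqF. Qed.

Lemma pNmin : p \in Nmin d.
Proof. by rewrite inE Hp. Qed.

Lemma allocmin_gt : 1 < L * alloc L c d p.
Proof.
rewrite (alloc_iii_min _ Hne Hcs pNmin) -/S0.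
have hk : 0 < (#|Nmin d|)%:R :> R.
  rewrite ltr0n card_gt0; apply/set0Pn; exists p; exact: pNmin.
rewrite mulrA ltr_pdivlMr // mul1r; exact: keyA.
Qed.

Lemma uniq_min : forall j, j != p -> tmin d < d j.
Proof.
move=> j jp; have [_ hm] := tmin_spec d j0.
rewrite lt_neqAle hm andbT; apply/negP => /eqP Hj.
have [Hvs [q Hq] Hle] := tsec_spec Hex.
have hcs := Hcs.
set v := tmin d in Hvs Hle Hq Hj hcs.
set s := tsec d in Hvs Hle Hq hcs.
have hv := v0; rewrite -/v in hv.
have ht := Ht p.
have hcv : v <= c * v.
  by rewrite -{1}(mul1r v) ler_wpM2r // ltW.
set x := c * v + t p + 1.
have hx : v < x by rewrite /x; lra.
have hxc : c * v <= x by rewrite /x; lra.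
have hxt : t p <= x by rewrite /x; lra.
have hmin : tmin (upd d p x) = v.
  apply: (tmin_eq (i := j)); first by rewrite upd_neq // -Hj.
  move=> k; case: (eqVneq k p) => [->|kp]; first by rewrite upd_eq ltW.
  by rewrite upd_neq //.
have [Hlt' [i Hi] Hle'] := tsec_spec (d := upd d p x)
   (ex_intro _ p (etrans (congr1 (fun z => z < _) hmin) (etrans (congr1 _ (upd_eq d p x)) hx))).
rewrite hmin in Hlt' Hle'.
have hcs' : c * v <= tsec (upd d p x).
  rewrite -Hi; case: (eqVneq i p) => [->|ip]; first by rewrite upd_eq.
  rewrite upd_neq //; apply: (le_trans hcs); apply: Hle.
  by move: Hlt'; rewrite -Hi upd_neq.
have := HNE p (ltW (le_lt_trans hv hx)).
rewrite /cost.
rewrite (@alloc_iii_oth _ _ L c (upd d p x)); first last.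
- by rewrite inE upd_eq hmin gt_eqF.
- by rewrite hmin.
- by rewrite hmin lt_eqF.
rewrite hmin upd_eq (max_l hxt).
have -> : v / (L * x) * x = v / L.
  have x0 : x != 0 by apply/lt0r_neq0/(le_lt_trans hv hx).
  have L0 : L != 0 by apply/lt0r_neq0; have := L2; lra.
  by fld.
have hA := allocmin_gt.
rewrite Hp.
have hM : v <= Num.max v (t p) by rewrite le_max lexx.
have hM2 : t p <= Num.max v (t p) by rewrite le_max lexx orbT.
set M := Num.max v (t p) in hM hM2 *.
set A := alloc L c d p in hA *.
move=> h.
have hL := L2.
have : L * (A * M) <= L * (v / L) by rewrite ler_pM2l //; lra.
have -> : L * (v / L) = v.
  have L0 : L != 0 by apply/lt0r_neq0; lra.
  by fld.
nra.
Qed.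


Lemma Nmin_p : Nmin d = [set p].
Proof. exact: Nmin1 Hp uniq_min. Qed.

Lemma S0_p : S0 = \sum_(k | k \notin [set p]) tmin d / (L * d k).
Proof. by rewrite /S0 Nmin_p. Qed.

Lemma allocp : alloc L c d p = 1 - S0.
Proof. by rewrite (alloc_iii_min _ Hne Hcs pNmin) -/S0 Nmin_p cards1 divr1. Qed.

Lemma S0_half : 2 * S0 < 1.
Proof.
have hB := keyB; rewrite Nmin_p in hB.
have hc := cardsC [set p]; rewrite cards1 card_ord in hc.
have hc' : (#|~: [set p]|)%:R = n%:R - 1 :> R.
  have : (1 + #|~: [set p]|)%:R = n%:R :> R by rewrite hc.
  rewrite natrD; lra.
rewrite hc' in hB.
move: HL; rewrite natrB; last by apply: leq_trans Hn.
move=> hL; have := L2; have := S0_ge0; nra.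
Qed.

Lemma others_ge_s j : j != p -> tsec d <= d j.
Proof. by move=> jp; have [_ _ H] := tsec_spec Hex; apply: H; apply: uniq_min. Qed.

Lemma dpos k : k != p -> 0 < d k.
Proof. move=> kp; apply: le_lt_trans (uniq_min kp); exact: v0. Qed.

Lemma tp_le : t p <= tmin d.
Proof.
rewrite leNgt; apply/negP => hvt.
have [Hvs [q Hq] Hle] := tsec_spec Hex.
have hv := v0.
set v := tmin d in Hvs Hle Hq hvt hv.
set s := tsec d in Hvs Hle Hq.
set y := Num.min (t p) s.
have hvy : v < y by rewrite /y lt_min hvt Hvs.
have hyt : y <= t p by rewrite /y ge_min lexx.
have hys : y <= s by rewrite /y ge_min lexx orbT.
set x := (v + y) / 2.
have hx1 : v < x by rewrite /x; lra.
have hx2 : x < y by rewrite /x; lra.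
have hoth : forall j, j != p -> x < upd d p x j.
  move=> j jp; rewrite upd_neq //; apply: (lt_le_trans hx2); apply: (le_trans hys).
  exact: others_ge_s.
have hmin' : tmin (upd d p x) = x.
  apply: (tmin_eq (i := p)); first by rewrite upd_eq.
  move=> j; case: (eqVneq j p) => [->|jp]; first by rewrite upd_eq.
  exact: ltW (hoth j jp).
have Np' : Nmin (upd d p x) = [set p].
  by apply: Nmin1; rewrite ?hmin' ?upd_eq.
have [q' q'p] := exists_other Hn p.
have [Hlt' _ _] := tsec_spec (d := upd d p x) (ex_intro _ q' (etrans (congr1 (fun z => z < _) hmin') (hoth q' q'p))).
have Hne' : tmin (upd d p x) != tsec (upd d p x) by rewrite lt_eqF.
have pN' : p \in Nmin (upd d p x) by rewrite Np' inE.
have := HNE p (ltW (le_lt_trans hv hx1)).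
rewrite /cost allocp Hp (max_r (ltW hvt)).
have hxt : x <= t p by apply: ltW; apply: lt_le_trans hx2 hyt.
have htp := Ht p.
have hL := L2.
case: (ltP (tsec (upd d p x)) (c * tmin (upd d p x))) => Hs'.
  rewrite (alloc_ii_min _ Hne' Hs' pN') Np' cards1 mulr1 upd_eq (max_r hxt).
  have hA := keyA; rewrite Nmin_p cards1 in hA.
  move=> h.
  have : L * ((1 - S0) * t p) <= L * (1 / L * t p) by rewrite ler_pM2l //; lra.
  have -> : L * (1 / L * t p) = t p.
    have L0 : L != 0 by apply/lt0r_neq0; lra.
    by fld.
  nra.
rewrite (alloc_iii_min _ Hne' Hs' pN') Np' cards1 divr1 upd_eq (max_r hxt) hmin'.
have hlt : S0 < \sum_(k | k \notin [set p]) x / (L * upd d p x k).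
  rewrite S0_p; apply: ltr_sum.
    by apply/hasP; exists q'; rewrite ?mem_index_enum // inE.
  move=> k; rewrite inE => kp; rewrite upd_neq //.
  rewrite ltr_pM2r // invr_gt0; apply: mulr_gt0; [lra|exact: dpos].
move=> h.
have : (1 - S0) * t p > (1 - \sum_(k | k \notin [set p]) x / (L * upd d p x k)) * t p.
  by rewrite ltr_pM2r //; lra.
lra.
Qed.


Lemma v_le_tp : tmin d <= t p.
Proof.
have hc1 := Hc.
rewrite leNgt; apply/negP => hxv.
have [Hvs [q Hq] Hle] := tsec_spec Hex.
have hcs := Hcs.
have hv := v0.
set v := tmin d in Hvs Hle Hq hxv hv hcs.
set s := tsec d in Hvs Hle Hq hcs.
set x := t p in hxv.
have hx0 : 0 < x := Ht p.
have hoth : forall j, j != p -> x < upd d p x j.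
  move=> j jp; rewrite upd_neq //; apply: (lt_trans hxv); exact: uniq_min.
have hmin' : tmin (upd d p x) = x.
  apply: (tmin_eq (i := p)); first by rewrite upd_eq.
  move=> j; case: (eqVneq j p) => [->|jp]; first by rewrite upd_eq.
  exact: ltW (hoth j jp).
have Np' : Nmin (upd d p x) = [set p].
  by apply: Nmin1; rewrite ?hmin' ?upd_eq.
have [q' q'p] := exists_other Hn p.
have [Hlt' [i Hi] _] := tsec_spec (d := upd d p x) (ex_intro _ q' (etrans (congr1 (fun z => z < _) hmin') (hoth q' q'p))).
rewrite hmin' in Hlt'.
have hcs' : c * x <= tsec (upd d p x).
  rewrite -Hi; case: (eqVneq i p) => [ip|ip].
    by move: Hlt'; rewrite -Hi ip upd_eq ltxx.
  rewrite upd_neq //; apply: le_trans (others_ge_s ip).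
  apply: le_trans hcs; rewrite ler_wpM2l ?(ltW hxv) //; exact: ltW (lt_trans ltr01 Hc).
have Hne' : tmin (upd d p x) != tsec (upd d p x) by rewrite hmin' lt_eqF.
have pN' : p \in Nmin (upd d p x) by rewrite Np' inE.
have := HNE p (ltW hx0).
rewrite /cost allocp Hp (max_l (ltW hxv)).
rewrite (alloc_iii_min _ Hne' _ pN'); last by rewrite hmin'.
rewrite Np' cards1 divr1 upd_eq (max_l (lexx x)) hmin'.
set S := \sum_(k | k \notin [set p]) (L * d k)^-1.
have hS1 : \sum_(k | k \notin [set p]) x / (L * upd d p x k) = x * S.
  rewrite /S mulr_sumr; apply: eq_bigr => k; rewrite inE => kp; by rewrite upd_neq.
have hS0 : S0 = v * S.
  rewrite S0_p /S mulr_sumr; by apply: eq_bigr.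
have hSge : 0 <= S.
  apply: sumr_ge0 => k; rewrite inE => kp; rewrite invr_ge0; apply: mulr_ge0.
    by have := L2; lra.
  exact: ltW (dpos kp).
have hh := S0_half.
rewrite hS1 hS0; rewrite hS0 in hh.
move=> h.
have h1 : S * x <= S * v by rewrite ler_wpM2l // ltW.
have h2 : 0 < (v - x) * (1 - S * (v + x)) by apply: mulr_gt0; nra.
nra.
Qed.

Lemma v_le_tm m : m != p -> tmin d <= t m.
Proof.
have hc1 := Hc.
move=> mp; rewrite leNgt; apply/negP => hmv.
have [Hvs [q Hq] Hle] := tsec_spec Hex.
have hcs := Hcs.
have hv := v0.
set v := tmin d in Hvs Hle Hq hmv hv hcs.
set s := tsec d in Hvs Hle Hq hcs.
have htm := Ht m.
have hv0 : 0 < v by lra.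
have hc0 : 0 < c by have := Hc; lra.
set ci := c^-1.
have hci : c * ci = 1 by rewrite /ci mulfV //; apply/lt0r_neq0.
have hci0 : 0 < ci by rewrite /ci invr_gt0.
set y := (v * ci + v) / 2.
have hvc : 0 < v * ci by apply: mulr_gt0.
have e1 : c * (v * ci) = v by rewrite mulrCA hci mulr1.
have e2 : v * ci < c * (v * ci) by rewrite -{1}(mul1r (v*ci)) ltr_pM2r.
have e3 : v < c * v by rewrite -{1}(mul1r v) ltr_pM2r.
have hcy : v < c * y by rewrite /y; lra.
have hyv : y < v by rewrite /y; lra.
set x := Num.max (t m) y.
have hxt : t m <= x by rewrite /x le_max lexx.
have hxy : y <= x by rewrite /x le_max lexx orbT.
have hxv : x < v by rewrite /x gt_max hmv hyv.
have hcx : v < c * x by apply: (lt_le_trans hcy); rewrite ler_wpM2l // ltW.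
have hoth : forall j, j != m -> x < upd d m x j.
  move=> j jm; rewrite upd_neq //; apply: (lt_le_trans hxv).
  by have [_ H] := tmin_spec d j0; apply: H.
have hmin' : tmin (upd d m x) = x.
  apply: (tmin_eq (i := m)); first by rewrite upd_eq.
  move=> j; case: (eqVneq j m) => [->|jm]; first by rewrite upd_eq.
  exact: ltW (hoth j jm).
have Nm' : Nmin (upd d m x) = [set m].
  by apply: Nmin1; rewrite ?hmin' ?upd_eq.
have pm : p != m by rewrite eq_sym.
have [Hlt' [i Hi] Hle'] := tsec_spec (d := upd d m x) (ex_intro _ p (etrans (congr1 (fun z => z < _) hmin') (hoth p pm))).
rewrite hmin' in Hlt' Hle'.
have hsv : tsec (upd d m x) = v.
  apply/le_anti; apply/andP; split.
    have := Hle' p; rewrite upd_neq // Hp; apply; exact: hxv.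
  rewrite -Hi; case: (eqVneq i m) => [im|im].
    by move: Hlt'; rewrite -Hi im upd_eq ltxx.
  by rewrite upd_neq //; have [_ H] := tmin_spec d j0; apply: H.
have Hne' : tmin (upd d m x) != tsec (upd d m x) by rewrite hmin' hsv lt_eqF.
have mN' : m \in Nmin (upd d m x) by rewrite Nm' inE.
have hx0 : 0 < x by lra.
have := HNE m (ltW hx0).
rewrite /cost (alloc_ii_min _ Hne' _ mN'); last by rewrite hsv hmin'.
rewrite Nm' cards1 mulr1 upd_eq (max_l hxt).
have mNmin : m \notin Nmin d by rewrite inE gt_eqF // uniq_min.
rewrite (alloc_iii_oth _ Hne Hcs mNmin) -/v.
have hdm : 0 < d m by exact: dpos.
have hM : d m <= Num.max (d m) (t m) by rewrite le_max lexx.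
set M := Num.max (d m) (t m) in hM *.
have hL := L2.
have h1 : v / L <= v / (L * d m) * M.
  have -> : v / L = v / (L * d m) * d m.
    have L0 : L != 0 by apply/lt0r_neq0; lra.
    have d0 : d m != 0 by apply/lt0r_neq0.
    by fld.
  rewrite ler_wpM2l //; apply: divr_ge0; [lra|nra].
move=> h2.
have h3 : v / L <= 1 / L * x by lra.
have : L * (v / L) <= L * (1 / L * x) by rewrite ler_pM2l //; lra.
have L0 : L != 0 by apply/lt0r_neq0; lra.
have -> : L * (v / L) = v by fld.
have -> : L * (1 / L * x) = x by fld.
lra.
Qed.

Lemma cost_oth k : k != p -> cost L c t d k <= tmin d / L.
Proof.
move=> kp.
have kN : k \notin Nmin d by rewrite inE gt_eqF // uniq_min.
have hdk := dpos kp.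
have hL := L2.
have L0 : L != 0 by apply/lt0r_neq0; lra.
rewrite /cost (alloc_iii_oth _ Hne Hcs kN).
case: (leP (t k) (d k)) => htk.
  have d0 : d k != 0 by apply/lt0r_neq0.
  have -> : tmin d / (L * d k) * d k = tmin d / L by fld.
  exact: lexx.
have hv := v0.
have hcs := Hcs.
have [Hvs _ Hle] := tsec_spec Hex.
set x := t k in htk *.
have hvk := uniq_min kp.
have hvx : tmin d < x by apply: lt_trans htk.
have hmin' : tmin (upd d k x) = tmin d.
  apply: (tmin_eq (i := p)); first by rewrite upd_neq 1?eq_sym.
  move=> j; case: (eqVneq j k) => [->|jk]; first by rewrite upd_eq ltW.
  by rewrite upd_neq //; have [_ H] := tmin_spec d j0; apply: H.
have [Hlt' [i Hi] _] := tsec_spec (d := upd d k x)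
   (ex_intro _ k (etrans (congr1 (fun z => z < _) hmin') (etrans (congr1 _ (upd_eq d k x)) hvx))).
rewrite hmin' in Hlt'.
have hcs' : c * tmin (upd d k x) <= tsec (upd d k x).
  rewrite hmin' -Hi; apply: (le_trans hcs).
  case: (eqVneq i k) => [->|ik].
    rewrite upd_eq; apply: ltW; apply: le_lt_trans htk; exact: others_ge_s.
  rewrite upd_neq //; apply: Hle; by move: Hlt'; rewrite -Hi upd_neq.
have Hne' : tmin (upd d k x) != tsec (upd d k x) by rewrite hmin' lt_eqF.
have kN' : k \notin Nmin (upd d k x) by rewrite inE upd_eq hmin' gt_eqF.
have hx0 : 0 < x := Ht k.
have := HNE k (ltW hx0).
rewrite /cost (alloc_iii_oth _ Hne Hcs kN) (max_r (ltW htk)).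
rewrite (alloc_iii_oth _ Hne' hcs' kN') hmin' upd_eq max_l //.
have x0 : x != 0 by apply/lt0r_neq0.
by have -> : tmin d / (L * x) * x = tmin d / L by fld.
Qed.

Lemma bound_III m : makespan L c t d <= (1 + (n - 1)%:R / L) * t m.
Proof.
have hvm : tmin d <= t m.
  case: (eqVneq m p) => [->|mp]; [exact: v_le_tp | exact: v_le_tm].
have hv := v0.
rewrite /makespan (bigD1 p) //=.
have h1 : alloc L c d p * Num.max (d p) (t p) <= tmin d.
  rewrite allocp Hp max_l; last exact: tp_le.
  have := S0_ge0; nra.
have h2 : \sum_(i | i != p) alloc L c d i * Num.max (d i) (t i) <=
          \sum_(i | i != p) tmin d / L.
  by apply: ler_sum => i ip; exact: cost_oth ip.
have h3 : \sum_(i | i != p) tmin d / L = (n - 1)%:R * (tmin d / L).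
  have E : \sum_(i < n) tmin d / L = tmin d / L + \sum_(i | i != p) tmin d / L.
    by rewrite (bigD1 p).
  have E2 : \sum_(i < n) tmin d / L = n%:R * (tmin d / L).
    by rewrite sumr_const card_ord mulr_natl.
  rewrite natrB; last by apply: leq_trans Hn.
  lra.
have hK : 0 <= (n - 1)%:R :> R by rewrite ler0n.
have hL := L2.
have hLi : 0 < L^-1 by rewrite invr_gt0; lra.
have e : (n - 1)%:R / L * t m - (n - 1)%:R * (tmin d / L) = (n - 1)%:R * L^-1 * (t m - tmin d).
  by rewrite /= mulrA; ring.
have : 0 <= (n - 1)%:R * L^-1 * (t m - tmin d).
  by apply: mulr_ge0; [apply: mulr_ge0 => //; lra | lra].
lra.
Qed.

End III.

Lemma bound m : makespan L c t d <= (1 + (n - 1)%:R / L) * t m.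
Proof.
case: (boolP [exists j, tmin d < d j]) => [/existsP [j hj]|/existsPn H].
  have [[p Hp] _] := tmin_spec d j0.
  exact: (bound_III (ex_intro _ j hj) (esym Hp)).
exfalso; apply: caseI => j; rewrite leNgt; exact: H j.
Qed.

End Main.

Unset Implicit Arguments.

Theorem theorem2 (R : realFieldType) (n : nat) (L c : R) :
  (2 <= n)%N -> 2 * (n - 1)%:R < L -> 1 < c ->
  forall t d : 'I_n -> R,
    (forall i, 0 < t i) ->
    pureNE L c t d ->
    makespan L c t d <= (1 + (n - 1)%:R / L) * tmin t.
Proof.
move=> Hn HL Hc t d Ht [Hd HNE].
have [[m Hm] _] := tmin_spec t (j0 Hn).
rewrite Hm; exact: (bound Hn HL Hc Ht Hd HNE).
Qed.
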